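(* Let $\Omega>0$ denote the maximum absolute value of the stored quantities, let $C$ be the column index of a Boolean scalar (stored as $X[1,C]\in\{0,1\}$) in $X\in\mathbb{R}^{K\times d}$, and let $D,E$ be column indices of two columns all of whose entries are Boolean. Then there exists a single transformer layer that simulates the repeat-AND operation $X[i,D]\leftarrow X[1,C]\wedge X[i,D]\wedge\neg X[i,E]$ for all $i\in\{2,3,\dots,K\}$.
   Context: Conventions: rows/columns indexed from $1$; $X[i,j]$ is the $(i,j)$ entry. $\wedge,\neg$ are logical AND and NOT on $\{0,1\}$. $\phi(x)=\max\{x,0\}$ entrywise. Hardmax $\sigma$: row $i$ of $\sigma(\Phi)$ is $\frac{1}{|S_i|}\sum_{k\in S_i}e_k$, $S_i=\{k:\Phi_{ik}=\max_j\Phi_{ij}\}$. For a weighted hypergraph with incident matrix $A\in\mathbb{R}^{n_v\times n_e}$ ($A_{ij}=w(e_j)$ if vertex $v_i\in e_j$, else $0$) and $K\ge\max\{n_v,n_e\}+1$, the padded incident matrix $\widetilde A\in\mathbb{R}^{K\times K}$ has $\widetilde A_{i+1,j+1}=A_{ij}$, zeros elsewhere. A transformer layer on $X\in\mathbb{R}^{K\times d}$ is $f(X,\widetilde A)=f_{\mathrm{mlp}}(f_{\mathrm{attn}}(X,\widetilde A))$, $f_{\mathrm{attn}}(X,\widetilde A)=\sum_{i\in M_A}\psi^{(i)}(X,\widetilde A)+\sum_{i\in M_{A^\top}}\psi^{(i)}(X,\widetilde A^\top)+\sum_{i\in M}\psi^{(i)}(X,I_K)+X$, $\psi(X,B)=B\,\sigma(XW_QW_K^\top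 X^\top)XW_V$ ($W_Q,W_K\in\mathbb{R}^{d\times2}$, $W_V\in\mathbb{R}^{d\times d}$), $f_{\mathrm{mlp}}(X)=Z^{(4)}W^{(4)}+X$, $Z^{(1)}=X$, $Z^{(j+1)}=\phi(Z^{(j)}W^{(j)})$ ($j=1,2,3$). Storage convention: scalars in the top row of a column (rest $0$), arrays of length $K-1$ in rows $2,\dots,K$ (top $0$); designated columns $B_{\mathrm{global}}$ (top $1$, rest $0$), $B_{\mathrm{local}}$ (top $0$, rest $1$), and scratchpad columns. ''Simulating an operation'' means the layer's weights can be chosen so that applying it to $X$ performs the stated update. *)

(* Defs.v *)
From HB Require Import structures.
From mathcomp Require Import all_boot all_order all_algebra.
From mathcomp Require Import reals.
Set Implicit Arguments. Unset Strict Implicit. Unset Printing Implicit Defensive.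
Import Order.TTheory GRing.Theory Num.Theory.
Local Open Scope ring_scope.

Section Transformer.
Variable R : realType.

Definition relu m n (M : 'M[R]_(m, n)) : 'M[R]_(m, n) :=
  map_mx (fun x => Num.max x 0) M.

Definition rowmax n (Phi : 'M[R]_n) (i : 'I_n) : R :=
  \big[Num.max/Phi i i]_(j < n) Phi i j.

Definition argmax_set n (Phi : 'M[R]_n) (i : 'I_n) : {set 'I_n} :=
  [set k | Phi i k == rowmax Phi i].

Definition hardmax n (Phi : 'M[R]_n) : 'M[R]_n :=
  \matrix_(i < n, k < n)
    (if k \in argmax_set Phi i then (#|argmax_set Phi i|%:R)^-1 else 0).

Record head (d : nat) := Head {
  WQ : 'M[R]_(d, 2); WK : 'M[R]_(d, 2); WV : 'M[R]_d }.

Definition psi K d (h : head d) (X : 'M[R]_(K, d)) (B : 'M[R]_K) : 'M[R]_(K, d) :=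
  B *m hardmax (X *m WQ h *m (WK h)^T *m X^T) *m X *m WV h.

(* A transformer layer: three families of heads (M_A, M_{A^T}, M) and a
   3-hidden-layer ReLU MLP with residual connection. *)
Record layer (d : nat) := Layer {
  headsA : seq (head d);
  headsAT : seq (head d);
  headsI : seq (head d);
  h1 : nat; h2 : nat; h3 : nat;
  W1 : 'M[R]_(d, h1); W2 : 'M[R]_(h1, h2);
  W3 : 'M[R]_(h2, h3); W4 : 'M[R]_(h3, d) }.

Definition f_attn K d (L : layer d) (X : 'M[R]_(K, d)) (At : 'M[R]_K) : 'M[R]_(K, d) :=
  \sum_(h <- headsA L) psi h X At + \sum_(h <- headsAT L) psi h X At^T
  + \sum_(h <- headsI L) psi h X 1%:M + X.

Definition f_mlp K d (L : layer d) (X : 'M[R]_(K, d)) : 'M[R]_(K, d) :=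
  let Z2 := relu (X *m W1 L) in
  let Z3 := relu (Z2 *m W2 L) in
  let Z4 := relu (Z3 *m W3 L) in
  Z4 *m W4 L + X.

Definition apply_layer K d (L : layer d) (X : 'M[R]_(K, d)) (At : 'M[R]_K) :=
  f_mlp L (f_attn L X At).

Record hypergraph := Hypergraph {
  nv : nat; ne : nat;
  mem_edge : 'I_nv -> 'I_ne -> bool;
  weight : 'I_ne -> R }.

Definition incidence (H : hypergraph) : 'M[R]_(nv H, ne H) :=
  \matrix_(i, j) (if mem_edge i j then weight j else 0).

(* Padded incidence matrix: A~[i+1, j+1] = A[i, j] (1-indexed), zeros elsewhere.
   With 0-indexed ordinals: A~ i j = A (i-1) (j-1) if i, j >= 1 and in range. *)
Definition padded K (H : hypergraph) : 'M[R]_K :=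
  \matrix_(i < K, j < K)
    if (0 < (i : nat))%N && (0 < (j : nat))%N then
      match insub (i : nat).-1 : option 'I_(nv H),
            insub (j : nat).-1 : option 'I_(ne H) with
      | Some i', Some j' => incidence H i' j'
      | _, _ => 0
      end
    else 0.

End Transformer.

(* Booleans stored as reals in {0,1}; top row = row 1 of the paper = index 0. *)
Definition is_bool {R : realType} (x : R) : Prop := x = 0 \/ x = 1.
Definition btrue {R : realType} (x : R) : bool := x == 1.
Definition of_bool {R : realType} (b : bool) : R := if b then 1 else 0.
Definition top {K : nat} (i : 'I_K) : bool := (i : nat) == 0%N.

(* Main.v *)
Require Import Defs.
From HB Require Import structures.
From mathcomp Require Import all_boot all_order all_algebra.
From mathcomp Require Import reals.
From mathcomp Require Import lra.
Import Order.TTheory GRing.Theory Num.Theory.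
Local Open Scope ring_scope.

Lemma sum_delta (R : realType) n (f : 'I_n -> R) (a : 'I_n) x :
  \sum_k f k * ((k == a)%:R * x) = f a * x.
Proof.
rewrite (bigD1 a) //= eqxx mul1r big1 ?addr0 // => k /negbTE ->.
by rewrite mul0r mulr0.
Qed.

Lemma hardmax0 (R : realType) K : (0 < K)%N ->
  hardmax (0 : 'M[R]_K) = const_mx (K%:R)^-1.
Proof.
move=> hK; apply/matrixP => i k; rewrite !mxE.
have r0 : rowmax (0 : 'M[R]_K) i = 0.
  rewrite /rowmax; elim/big_rec: _ => [|j x _ ->]; rewrite ?mxE //.
  by rewrite maxxx.
have -> : argmax_set (0 : 'M[R]_K) i = setT.
  by apply/setP => j; rewrite !inE r0 mxE eqxx.
by rewrite in_setT cardsT card_ord.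
Qed.

Lemma sum_lin (R : realType) n (f : 'I_n -> R) (r : 'I_n -> R) (a : 'I_n) x :
  \sum_k f k * (r k + (k == a)%:R * x) = \sum_k f k * r k + f a * x.
Proof. by rewrite -sum_delta -big_split; apply: eq_bigr => k _; rewrite mulrDr. Qed.

Lemma relu_relu (R : realType) m n (M : 'M[R]_(m, n)) : relu (relu M) = relu M.
Proof.
apply/matrixP => i j; rewrite !mxE.
by rewrite -maxA maxxx.
Qed.

Ltac rlx := do 6 try match goal with |- context[@Order.max _ _ ?x ?y] =>
  let H := fresh in case: (lerP x y) => H end; lra.

Lemma keyD (R : realType) (c xd xe : R) (t : bool) : (c = 0 \/ c = 1) -> (xd = 0 \/ xd = 1) -> (xe = 0 \/ xe = 1) ->
 Num.max (c + xd + xe * -1 + (if t then 0 else 1) * -1 + (if t then 1 else 0) * -2) 0 + (Num.max (xd + (if t then 1 else 0) * -1) 0 * -1 + Num.max c 0 * -0) + xd = (if ~~ t then of_bool (btrue c && btrue xd && ~~ btrue xe) else xd).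
Proof.
have oz : (1 == 0 :> R) = false by rewrite oner_eq0.
have zo : (0 == 1 :> R) = false by rewrite eq_sym oner_eq0.
Time case: t => /= -[]-> -[]-> -[]->; rewrite /of_bool /btrue ?eqxx ?oz ?zo /=; rlx.
Qed.

Lemma keyS (R : realType) (A B c : R) : (c = 0 \/ c = 1) ->
  A * 0 + (B * -0 + Num.max c 0 * -1) + c = 0.
Proof. by case=> ->; rlx. Qed.

Theorem lemmaC9 (R : realType) (K d : nat) (hK : (0 < K)%N) (Omega : R)
    (C D E G L S : 'I_d) :
  0 < Omega ->
  uniq [:: G; L; S] -> G \notin [:: C; D; E] -> L \notin [:: C; D; E] ->
  S \notin [:: C; D; E] ->
  exists Lay : layer R d,
    forall (H : hypergraph R) (X : 'M[R]_(K, d)),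
      (K >= maxn (nv H) (ne H) + 1)%N ->
      (forall i j, `|X i j| <= Omega) ->
      (forall i, X i G = if top i then 1 else 0) ->
      (forall i, X i L = if top i then 0 else 1) ->
      (forall i, X i S = 0) ->
      is_bool (X (Ordinal hK) C) -> (forall i, ~~ top i -> X i C = 0) ->
      (forall i, is_bool (X i D)) -> (forall i, is_bool (X i E)) ->
      apply_layer Lay X (padded K H) =
        \matrix_(i < K, j < d)
          (if (j == D) && ~~ top i then
             of_bool (btrue (X (Ordinal hK) C) && btrue (X i D) && ~~ btrue (X i E))
           else X i j).
Proof.
move=> _ uq nG nL nS.
move: uq nG nL nS; rewrite /= !inE !negb_or => /and3P[/andP[GL GS] LS _].
move=> /and3P[GC GD GE] /and3P[LC LD LE] /and3P[SC SD SE].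
pose WV : 'M[R]_d := \matrix_(k, j) (if (k == C) && (j == S) then K%:R else 0).
pose hd := @Head R d 0 0 WV.
pose w (m : 'I_3) (k : 'I_d) : R :=
  if (m : nat) == 0%N then (k==S)%:R * 1 + (k==D)%:R * 1 + (k==E)%:R * (-1)
       + (k==L)%:R * (-1) + (k==G)%:R * (-2)
  else if (m : nat) == 1%N then (k==D)%:R * 1 + (k==G)%:R * (-1)
  else (k==S)%:R * 1.
pose W1 : 'M[R]_(d, 3) := \matrix_(k, m) w m k.
pose W4 : 'M[R]_(3, d) := \matrix_(m, j)
  (if (m : nat) == 0%N then (j == D)%:R else if (m : nat) == 1%N then - (j==D)%:R
   else - (j == S)%:R).
exists (@Layer R d [::] [::] [:: hd] 3 3 3 W1 1%:M 1%:M W4).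
move=> H X _ _ XG XL XS XCb XC0 XDb XEb.
set c := X (Ordinal hK) C.
have sC : \sum_l X l C = c.
  rewrite (bigD1 (Ordinal hK)) //= big1 ?addr0 //.
have Y : f_attn (@Layer R d [::] [::] [:: hd] 3 3 3 W1 1%:M 1%:M W4) X (padded K H)
   = X + \matrix_(i,j) ((j==S)%:R * c).
  rewrite /f_attn /= !big_nil big_seq1 !add0r addrC; congr (_ + _).
  rewrite /psi /= mulmx0 !mul0mx mul1mx hardmax0 //.
  apply/matrixP => i j; rewrite !mxE.
  rewrite (bigD1 C) //= big1 ?addr0 => [|k /negbTE kC]; last first.
    by rewrite /WV [in X in _ * X]mxE kC mulr0.
  rewrite /WV !mxE eqxx /=.
  under eq_bigr do rewrite mxE.
  rewrite -mulr_sumr sC.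
  have K0 : (K%:R : R) != 0 by rewrite pnatr_eq0 -lt0n.
  case: (j == S); last by rewrite mulr0 mul0r.
  by rewrite mul1r mulrAC mulVf // mul1r.
rewrite /apply_layer Y /f_mlp; apply/matrixP => i j.
rewrite /= !mulmx1 !relu_relu.
set Yc := X + _.
have eY : forall k, Yc i k = X i k + (k == S)%:R * c by move=> k; rewrite !mxE.
have ev : forall m, \sum_k Yc i k * W1 k m = \sum_k (X i k + (k == S)%:R * c) * w m k.
  by move=> m; apply: eq_bigr => k _; rewrite eY /W1 mxE.
rewrite !mxE.
rewrite !big_ord_recl big_ord0 addr0 /relu !mxE /= !ev /w /=.
rewrite !sum_lin !sum_delta.
rewrite eqxx (eq_sym D S) (negbTE SD) (eq_sym E S) (negbTE SE) (negbTE LS) (negbTE GS).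
rewrite XS XG XL.
have cb : c = 0 \/ c = 1 := XCb.
have db := XDb i; have eb := XEb i.
have oz : (1 == 0 :> R) = false by rewrite oner_eq0.
have zo : (0 == 1 :> R) = false by rewrite eq_sym oner_eq0.
clearbody c.
case: (eqVneq j D) => [->|jD].
  move: (X i D) (X i E) db eb => xd xe db eb.
  rewrite ?(eq_sym D S) ?(negbTE SD) ?eqxx /=.
  rewrite !mulr1 !mul0r !addr0 !mul1r !add0r.
  exact: keyD.
case: (eqVneq j S) => [->|jS].
  rewrite XS /= !mulr1 !mul0r !addr0 !mul1r !add0r.
  exact: keyS.
rewrite /= !mulr1 !mul0r !addr0 !mul1r !add0r.
lra.
Qed.
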